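(* Let $\epsilon>0$ and $\omega\ge0$ be constants, $\phi_0$ a real constant, and $\omega(t)$ a real-valued function with $|\omega(t)|\le\omega$. Let $H^A(t)=[1+\omega(t)]I_z+\epsilon\cos\phi_0 I_y+\epsilon\sin\phi_0 I_x$ and $H^B=\epsilon\cos\phi_0 I_y+\epsilon\sin\phi_0 I_x$. Consider two single-qubit pure-state evolutions $\dot\rho^A_t=-i[H^A(t),\rho^A_t]$ and $\dot\rho^B_t=-i[H^B,\rho^B_t]$, both starting from the state with Bloch vector $(x_0,y_0,z_0)=(0,0,1)$, and let $z^A_t=\mathrm{tr}(\rho^A_t\sigma_z)$, $z^B_t=\mathrm{tr}(\rho^B_t\sigma_z)$. Then $z^A_t\ge z^B_t$ for all $t\in\big[0,\frac{\pi}{2\sqrt{4+\epsilon^2}}\big]$.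
   Context: $\sigma_x,\sigma_y,\sigma_z$ are the Pauli matrices $\begin{pmatrix}0&1\\1&0\end{pmatrix},\begin{pmatrix}0&-i\\i&0\end{pmatrix},\begin{pmatrix}1&0\\0&-1\end{pmatrix}$, $I_j=\frac12\sigma_j$, $[A,B]=AB-BA$, units with $\hbar=1$. The Bloch vector of a qubit state $\rho$ is $(x,y,z)=(\mathrm{tr}(\rho\sigma_x),\mathrm{tr}(\rho\sigma_y),\mathrm{tr}(\rho\sigma_z))$, so that $\rho=\frac12(I+x\sigma_x+y\sigma_y+z\sigma_z)$. *)

(* Defs.v *)
From Stdlib Require Export Reals.
From Coquelicot Require Export Coquelicot.

Open Scope R_scope.

(* 2x2 complex matrices, indices false = 0, true = 1 *)
Definition M2 := bool -> bool -> C.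

Definition mmul (A B : M2) : M2 :=
  fun i j => (A i false * B false j + A i true * B true j)%C.
Definition madd (A B : M2) : M2 := fun i j => (A i j + B i j)%C.
Definition msub (A B : M2) : M2 := fun i j => (A i j - B i j)%C.
Definition mscal (c : C) (A : M2) : M2 := fun i j => (c * A i j)%C.
Definition comm (A B : M2) : M2 := msub (mmul A B) (mmul B A).
Definition mtr (A : M2) : C := (A false false + A true true)%C.

Definition mk2 (a b c d : C) : M2 :=
  fun i j => match i, j with
             | false, false => a | false, true => b
             | true, false => c | true, true => d end.

Definition Id2 : M2 := mk2 1 0 0 1.
Definition sigma_x : M2 := mk2 0 1 1 0.
Definition sigma_y : M2 := mk2 0 (- Ci)%C Ci 0.
Definition sigma_z : M2 := mk2 1 0 0 (-1).

Definition Ix : M2 := mscal (RtoC (/2)) sigma_x.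
Definition Iy : M2 := mscal (RtoC (/2)) sigma_y.
Definition Iz : M2 := mscal (RtoC (/2)) sigma_z.

Definition bloch_state (x y z : R) : M2 :=
  mscal (RtoC (/2)) (madd Id2 (madd (mscal (RtoC x) sigma_x)
        (madd (mscal (RtoC y) sigma_y) (mscal (RtoC z) sigma_z)))).

Definition HA (eps phi0 : R) (wt : R -> R) (t : R) : M2 :=
  madd (mscal (RtoC (1 + wt t)) Iz)
       (madd (mscal (RtoC (eps * cos phi0)) Iy) (mscal (RtoC (eps * sin phi0)) Ix)).

Definition HB (eps phi0 : R) : M2 :=
  madd (mscal (RtoC (eps * cos phi0)) Iy) (mscal (RtoC (eps * sin phi0)) Ix).

Definition solves_vN (H : R -> M2) (rho : R -> M2) (rho0 : M2) : Prop :=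
  rho 0 = rho0 /\
  (forall i j, filterlim (fun s => rho s i j) (at_right 0) (locally (rho 0 i j))) /\
  (forall t, 0 < t -> forall i j,
      is_derive (fun s => rho s i j) t ((- Ci) * comm (H t) (rho t) i j)%C).

Definition zcoord (rho : M2) : R := Re (mtr (mmul rho sigma_z)).

(* Main.v *)
Require Import Defs.
From Stdlib Require Import Lra Psatz.
Open Scope R_scope.
Definition Hgen (a b c : R) : M2 :=
  madd (mscal (RtoC a) Iz) (madd (mscal (RtoC b) Iy) (mscal (RtoC c) Ix)).
Definition dz (rho : R -> M2) s := Re (rho s false false) - Re (rho s true true).
Definition yI (b c : R) (rho : R -> M2) s :=
  (c/2) * (Im (rho s true false) - Im (rho s false true)) + (-b/2) * (Re (rho s true false) + Re (rho s false true)).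
Definition vR (b c : R) (rho : R -> M2) s :=
  (c/2) * (Re (rho s true false) + Re (rho s false true)) + (-b/2) * (Im (rho s false true) - Im (rho s true false)).


Lemma ball_R (x e y : R) : ball x e y <-> Rabs (y - x) < e.
Proof. reflexivity. Qed.

Lemma mono0 (F dF : R -> R) : filterlim F (at_right 0) (locally (F 0)) ->
  (forall t, 0 < t -> is_derive F t (dF t) /\ dF t <= 0) -> forall t, 0 <= t -> F t <= F 0.
Proof.
  intros Hc Hd t Ht.
  destruct (Req_dec t 0) as [->|Ht0]; [lra|].
  assert (Hs: forall s, 0 < s < t -> F t <= F s).
  { intros s Hs. destruct (MVT_cor2 F dF s t) as [x [Hx1 Hx2]]; [lra| |].
    - intros x Hx. apply is_derive_Reals. apply Hd; lra.
    - assert (dF x <= 0) by (apply Hd; lra). nra. }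
  apply Rnot_lt_le; intro Hlt.
  assert (He : 0 < F t - F 0) by lra.
  pose proof (proj1 (filterlim_locally _ _) Hc (mkposreal _ He)) as [d Hdl].
  set (s := Rmin (d/2) (t/2)).
  assert (Hs0 : 0 < s) by (unfold s; destruct d; simpl; apply Rmin_glb_lt; lra).
  assert (Hs1 : s < t) by (unfold s; eapply Rle_lt_trans; [apply Rmin_r|lra]).
  assert (Hs2 : s < d) by (unfold s; destruct d; simpl; eapply Rle_lt_trans; [apply Rmin_l|simpl;lra]).
  specialize (Hdl s). simpl in Hdl.
  assert (Hb : ball 0 d s). { apply ball_R. rewrite Rminus_0_r, Rabs_pos_eq; lra. }
  specialize (Hdl Hb Hs0). apply ball_R in Hdl.
  specialize (Hs s (conj Hs0 Hs1)).
  apply Rabs_def2 in Hdl. simpl in Hdl. destruct Hdl. change (minus (F s) (F 0)) with (F s - F 0) in *. lra.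
Qed.

Lemma lim_plus {F} {FF : Filter F} (f g : R -> R) a b : filterlim f F (locally a) -> filterlim g F (locally b) ->
  filterlim (fun x => f x + g x) F (locally (a + b)).
Proof. intros Hf Hg. eapply filterlim_comp_2; [exact Hf|exact Hg|]. apply (filterlim_plus (K:=R_AbsRing) (V:=R_NormedModule)). Qed.
Lemma lim_mult {F} {FF : Filter F} (f g : R -> R) a b : filterlim f F (locally a) -> filterlim g F (locally b) ->
  filterlim (fun x => f x * g x) F (locally (a * b)).
Proof. intros Hf Hg. eapply filterlim_comp_2; [exact Hf|exact Hg|]. apply (filterlim_mult (K:=R_AbsRing)). Qed.
Lemma lim_const {F} {FF : Filter F} (a : R) : filterlim (fun _ : R => a) F (locally a).
Proof. apply filterlim_const. Qed.
Lemma lim_opp {F} {FF : Filter F} (f : R -> R) a : filterlim f F (locally a) ->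
  filterlim (fun x => - f x) F (locally (- a)).
Proof. intros Hf. eapply filterlim_comp; [exact Hf|]. apply (filterlim_opp (K:=R_AbsRing) (V:=R_NormedModule)). Qed.
Lemma lim_cont (g : R -> R) : (forall x, continuity_pt g x) -> 
  filterlim g (at_right 0) (locally (g 0)).
Proof. intros Hg. eapply filterlim_comp with (G := locally 0).
  - intros P [d Hd]. exists d. intros y Hy _. apply Hd; exact Hy.
  - apply continuity_pt_filterlim. apply Hg. Qed.
Lemma cont_eps (f : R -> R) c eps : continuity_pt f c -> 0 < eps ->
  exists alp, 0 < alp /\ forall x, Rabs (x - c) < alp -> Rabs (f x - f c) < eps.
Proof.
  intros Hc He. destruct (Hc eps He) as [alp [Ha H]]. exists alp; split; [lra|].
  intros x Hx. destruct (Req_dec x c) as [->|Hne].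
  - rewrite Rminus_diag, Rabs_R0; lra.
  - apply (H x). split; [split; [exact I| congruence]|]. exact Hx.
Qed.

Lemma rc_from (d : R -> R) : filterlim d (at_right 0) (locally (d 0)) ->
  (forall x, 0 < x -> continuity_pt d x) ->
  forall x, 0 <= x -> forall eta, 0 < eta -> exists del, 0 < del /\
     forall s, x <= s < x + del -> Rabs (d s - d x) < eta.
Proof.
  intros H0 Hc x Hx eta He.
  destruct (Req_dec x 0) as [->|Hx0].
  - pose proof (proj1 (filterlim_locally _ _) H0 (mkposreal _ He)) as [del Hdl].
    exists del; split; [apply cond_pos|]. intros s Hs.
    destruct (Req_dec s 0) as [->|Hs0]; [rewrite Rminus_diag, Rabs_R0; lra|].
    specialize (Hdl s). simpl in Hdl.
    assert (Hb : ball 0 del s). { change (Rabs (s - 0) < del). rewrite Rminus_0_r, Rabs_pos_eq; lra. }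
    specialize (Hdl Hb ltac:(lra)). exact Hdl.
  - destruct (cont_eps d x eta (Hc x ltac:(lra)) He) as [alp [Ha H]].
    exists alp; split; [lra|]. intros s Hs. apply H. rewrite Rabs_pos_eq; lra.
Qed.

Lemma cos_le_dec x y : 0 <= x -> x <= y -> y <= PI -> cos y <= cos x.
Proof. intros. destruct (Req_dec x y) as [->|]; [lra|]. left; apply cos_decreasing_1; lra. Qed.

Lemma compare (d D : R -> R) (e T : R) : 0 < e -> d 0 = 1 ->
  filterlim d (at_right 0) (locally (d 0)) ->
  (forall x, 0 < x -> derivable_pt_lim d x (D x)) ->
  (forall x, 0 < x -> D x * D x <= e * e * (1 - d x * d x)) ->
  0 <= T -> e * T <= PI / 2 -> cos (e * T) <= d T.
Proof.
  intros He Hd0 Hr0 HD HDb HT HeT.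
  pose proof PI_RGT_0 as Hpi.
  assert (Hcont : forall x, 0 < x -> continuity_pt d x).
  { intros x Hx. apply derivable_continuous_pt. exists (D x). apply HD; exact Hx. }
  pose proof (rc_from d Hr0 Hcont) as Hrc.
  destruct (Req_dec T 0) as [->|HT0].
  { rewrite Rmult_0_r, cos_0, Hd0; lra. }
  apply Rnot_lt_le; intro HdT.
  set (E := fun x => 0 <= x <= T /\ cos (e * x) <= d x).
  assert (HEb : bound E). { exists T. intros x [Hx _]; lra. }
  assert (HE0 : E 0). { unfold E. rewrite Rmult_0_r, cos_0, Hd0; lra. }
  destruct (completeness E HEb (ex_intro _ 0 HE0)) as [c [Hub Hlub]].
  assert (Hc0 : 0 <= c) by (apply Hub; exact HE0).
  assert (HcT : c <= T). { apply Hlub. intros x [Hx _]; lra. }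
  assert (Hcl : cos (e * c) <= d c).
  { destruct (Req_dec c 0) as [->|Hcn0]; [rewrite Rmult_0_r, cos_0, Hd0; lra|].
    apply Rnot_lt_le; intro Hlt.
    set (g := fun x => d x - cos (e * x)).
    assert (Hg : continuity_pt g c).
    { unfold g. apply continuity_pt_minus. apply Hcont; lra. reg. }
    destruct (cont_eps g c (cos (e*c) - d c) Hg ltac:(lra)) as [alp [Ha Hal]].
    set (c' := c - Rmin alp c / 2).
    assert (Hm1 : 0 < Rmin alp c) by (apply Rmin_glb_lt; lra).
    assert (Hm2 : Rmin alp c <= alp) by apply Rmin_l.
    assert (Hub' : is_upper_bound E c').
    { intros x Hx. destruct (Rle_lt_dec x c') as [|Hxc]; [lra|].
      exfalso. assert (Hxc2 : x <= c) by (apply Hub; exact Hx).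
      specialize (Hal x ltac:(rewrite Rabs_left1; unfold c' in Hxc; lra)).
      unfold g in Hal. apply Rabs_def2 in Hal. destruct Hx as [_ Hx]. lra. }
    specialize (Hlub c' Hub'). unfold c' in Hlub. lra. }
  assert (HcE : E c) by (split; [lra|exact Hcl]).
  assert (HcT' : c < T). { destruct (Req_dec c T) as [->|]; [lra|lra]. }
  assert (Hafter : forall x, c < x <= T -> d x < cos (e * x)).
  { intros x Hx. apply Rnot_le_lt; intro Hle.
    assert (x <= c) by (apply Hub; split; [lra|exact Hle]). lra. }
  assert (Hcosc : 0 <= cos (e * c)).
  { apply cos_ge_0; nra. }
  destruct (Hrc c Hc0 (1/2) ltac:(lra)) as [d1 [Hd1 Hd1b]].
  set (t2 := Rmin T (c + d1 / 2)).
  assert (Ht2a : c < t2) by (unfold t2; apply Rmin_glb_lt; lra).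
  assert (Ht2b : t2 <= T) by apply Rmin_l.
  assert (Ht2c : t2 <= c + d1/2) by apply Rmin_r.
  assert (Hrange : forall x, c < x <= t2 -> -1 < d x < 1).
  { intros x Hx. split.
    - specialize (Hd1b x ltac:(lra)). apply Rabs_def2 in Hd1b. lra.
    - pose proof (Hafter x ltac:(lra)). pose proof (COS_bound (e * x)). lra. }
  assert (Hdt2 : d t2 < cos (e * t2)) by (apply Hafter; lra).
  assert (Hkey : acos (d t2) <= e * t2).
  { apply Rnot_lt_le; intro Hgt.
    set (eta := (acos (d t2) - e * t2) / 2).
    assert (Heta : 0 < eta) by (unfold eta; lra).
    pose proof (acos_bound (d t2)) as Hab.
    assert (Hec : e * c + eta <= PI) by (unfold eta; nra).
    assert (Hcos2 : cos (e * c + eta) < cos (e * c)).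
    { apply cos_decreasing_1; nra. }
    destruct (Hrc c Hc0 (d c - cos (e * c + eta)) ltac:(lra)) as [d2 [Hd2 Hd2b]].
    set (s := c + Rmin d2 (t2 - c) / 2).
    assert (Hm1 : 0 < Rmin d2 (t2 - c)) by (apply Rmin_glb_lt; lra).
    assert (Hm2 : Rmin d2 (t2 - c) <= d2) by apply Rmin_l.
    assert (Hm3 : Rmin d2 (t2 - c) <= t2 - c) by apply Rmin_r.
    assert (Hs1 : c < s) by (unfold s; lra).
    assert (Hs2 : s < t2) by (unfold s; lra).
    assert (Hds : cos (e * c + eta) < d s).
    { specialize (Hd2b s ltac:(unfold s; lra)). apply Rabs_def2 in Hd2b. lra. }
    assert (Hacs : acos (d s) < e * c + eta).
    { apply Rnot_le_lt; intro Hle.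
      pose proof (acos_bound (d s)).
      pose proof (Hrange s ltac:(lra)).
      assert (cos (acos (d s)) <= cos (e * c + eta)) by (apply cos_le_dec; nra).
      rewrite cos_acos in H1 by lra. lra. }
    set (g := fun x => acos (d x) - e * x).
    set (g' := fun x => - D x / sqrt (1 - d x * d x) - e).
    assert (Hder : forall x, s <= x <= t2 -> derivable_pt_lim g x (g' x)).
    { intros x Hx. pose proof (Hrange x ltac:(lra)) as Hr.
      unfold g, g'.
      apply derivable_pt_lim_minus.
      - replace (- D x / sqrt (1 - d x * d x)) with ((-1 / sqrt (1 - (d x)²)) * D x)
          by (unfold Rsqr; field; apply Rgt_not_eq, sqrt_lt_R0; nra).
        apply (derivable_pt_lim_comp d acos x (D x)).
        + apply HD; lra.
        + apply derive_pt_eq_1 with (pr := derivable_pt_acos (d x) Hr).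
          apply derive_pt_acos.
      - replace e with (e * 1) at 2 by ring.
        apply derivable_pt_lim_scal, derivable_pt_lim_id. }
    destruct (MVT_cor2 g g' s t2 Hs2 Hder) as [x [Hx1 Hx2]].
    assert (Hg'x : g' x <= 0).
    { pose proof (Hrange x ltac:(lra)) as Hr.
      assert (Hq : 0 < 1 - d x * d x) by nra.
      assert (Hsq : 0 < sqrt (1 - d x * d x)) by (apply sqrt_lt_R0; lra).
      assert (HDx : - D x <= e * sqrt (1 - d x * d x)).
      { assert (HH : Rabs (D x) <= e * sqrt (1 - d x * d x)).
        { rewrite <- (sqrt_Rsqr (e) ltac:(lra)), <- sqrt_mult_alt by (unfold Rsqr; nra).
          rewrite <- sqrt_Rsqr_abs. apply sqrt_le_1_alt. unfold Rsqr.
          pose proof (HDb x ltac:(lra)). nra. }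
        pose proof (Rle_abs (- D x)). rewrite Rabs_Ropp in H. lra. }
      unfold g'. unfold Rdiv. 
      assert (- D x * / sqrt (1 - d x * d x) <= e).
      { apply (Rmult_le_reg_r (sqrt (1 - d x * d x))); [lra|].
        rewrite Rmult_assoc, Rinv_l by lra. lra. }
      lra. }
    assert (Hp : g' x * (t2 - s) <= 0).
    { assert (0 <= - g' x) by lra. assert (0 < t2 - s) by lra. nra. }
    assert (Hes : e * c < e * s) by nra.
    unfold g in Hx1; cbv beta in Hx1.
    assert (acos (d t2) - e * t2 <= acos (d s) - e * s) by lra.
    assert (Heq : eta = (acos (d t2) - e * t2) / 2) by reflexivity.
    clearbody g g' s eta t2. lra. }
  pose proof (Hrange t2 ltac:(lra)) as Hr2.
  assert (Hfin : cos (e * t2) <= cos (acos (d t2))).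
  { apply cos_le_dec; [apply acos_bound|exact Hkey|nra]. }
  rewrite cos_acos in Hfin by lra. lra.
Qed.

Lemma is_linear_Re : is_linear (V:=R_NormedModule) (fun z : C => Re z).
Proof. apply (is_linear_fst (U:=R_NormedModule) (V:=R_NormedModule)). Qed.
Lemma is_linear_Im : is_linear (V:=R_NormedModule) (fun z : C => Im z).
Proof. apply (is_linear_snd (U:=R_NormedModule) (V:=R_NormedModule)). Qed.
Lemma is_derive_Re (f : R -> C) t v : is_derive f t v -> is_derive (fun s => Re (f s)) t (Re v).
Proof.
  intros H. unfold is_derive. eapply filterdiff_ext_lin.
  - apply (filterdiff_comp f (fun z : C => Re z)). exact H. apply filterdiff_linear. apply is_linear_Re.
  - intros y. simpl. unfold scal; simpl. unfold mult; simpl. reflexivity.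
Qed.
Lemma is_derive_Im (f : R -> C) t v : is_derive f t v -> is_derive (fun s => Im (f s)) t (Im v).
Proof.
  intros H. unfold is_derive. eapply filterdiff_ext_lin.
  - apply (filterdiff_comp f (fun z : C => Im z)). exact H. apply filterdiff_linear. apply is_linear_Im.
  - intros y. simpl. unfold scal; simpl. unfold mult; simpl. reflexivity.
Qed.

Section S.
Variables (rho : R -> M2) (a b c t : R).
Hypothesis Hd : forall i j, is_derive (fun s => rho s i j) t ((- Ci) * comm (Hgen a b c) (rho t) i j)%C.


Ltac dv H := match type of H with is_derive ?f ?x ?d =>
  replace (Derive (fun y => f y) x) with d by (symmetry; apply is_derive_unique; exact H) end.
Lemma lin2 (f1 f2 : R -> R) d1 d2 x : is_derive f1 x d1 -> is_derive f2 x d2 ->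
  is_derive (fun s => f1 s - f2 s) x (d1 - d2).
Proof. intros H1 H2. auto_derive. repeat split; eexists; eassumption.
  dv H1; dv H2; ring. Qed.
Lemma lin4 (f1 f2 f3 f4 : R -> R) d1 d2 d3 d4 x k1 k2 : is_derive f1 x d1 -> is_derive f2 x d2 ->
  is_derive f3 x d3 -> is_derive f4 x d4 ->
  is_derive (fun s => k1 * (f1 s - f2 s) + k2 * (f3 s + f4 s)) x (k1 * (d1 - d2) + k2 * (d3 + d4)).
Proof. intros H1 H2 H3 H4. auto_derive. repeat split; eexists; eassumption.
  dv H1; dv H2; dv H3; dv H4; ring. Qed.
Lemma lin4' (f1 f2 f3 f4 : R -> R) d1 d2 d3 d4 x k1 k2 : is_derive f1 x d1 -> is_derive f2 x d2 ->
  is_derive f3 x d3 -> is_derive f4 x d4 ->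
  is_derive (fun s => k1 * (f1 s + f2 s) + k2 * (f3 s - f4 s)) x (k1 * (d1 + d2) + k2 * (d3 - d4)).
Proof. intros H1 H2 H3 H4. auto_derive. repeat split; eexists; eassumption.
  dv H1; dv H2; dv H3; dv H4; ring. Qed.


Lemma is_derive_val (f : R -> R) x l l' : is_derive f x l -> l = l' -> is_derive f x l'.
Proof. intros H ->; exact H. Qed.

Ltac fin := match goal with |- ?x = ?y => change (@eq R x y) end; cbv beta iota delta [comm Hgen msub mmul madd mscal Iz Iy Ix sigma_x sigma_y sigma_z mk2 dz yI vR Cmult Cplus Cminus Copp RtoC Ci Re Im]; cbn [fst snd]; field.

Lemma der_dz : is_derive (dz rho) t (2 * yI b c rho t).
Proof. unfold dz. eapply is_derive_val.
  apply (lin2 _ _ _ _ _ (is_derive_Re _ _ _ (Hd false false)) (is_derive_Re _ _ _ (Hd true true))). unfold comm, Hgen, msub, mmul, madd, mscal, Iz, Iy, Ix, sigma_x, sigma_y, sigma_z, mk2; unfold dz, yI, vR; simpl. fin. Qed.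
Lemma der_yI : is_derive (yI b c rho) t (a * vR b c rho t - 2 * ((b^2+c^2)/4) * dz rho t).
Proof. unfold yI. eapply is_derive_val.
  apply (lin4 _ _ _ _ _ _ _ _ _ _ _ (is_derive_Im _ _ _ (Hd true false)) (is_derive_Im _ _ _ (Hd false true))
     (is_derive_Re _ _ _ (Hd true false)) (is_derive_Re _ _ _ (Hd false true))). cbv beta iota delta [comm Hgen msub mmul madd mscal Iz Iy Ix sigma_x sigma_y sigma_z mk2 dz yI vR Cmult Cplus Cminus Copp RtoC Ci Re Im]; cbn [fst snd]. fin. Qed.
Lemma der_vR : is_derive (vR b c rho) t (- a * yI b c rho t).
Proof. unfold vR. eapply is_derive_val.
  apply (lin4' _ _ _ _ _ _ _ _ _ _ _ (is_derive_Re _ _ _ (Hd true false)) (is_derive_Re _ _ _ (Hd false true))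
     (is_derive_Im _ _ _ (Hd false true)) (is_derive_Im _ _ _ (Hd true false))). fin. Qed.
End S.

Ltac cmp := match goal with |- ?x = ?y => change (@eq R x y) end;
  cbv beta iota delta [comm Hgen HA HB bloch_state zcoord mtr msub mmul madd mscal Iz Iy Ix Id2 sigma_x sigma_y sigma_z mk2 dz yI vR Cmult Cplus Cminus Copp RtoC Ci Re Im]; cbn [fst snd].

Lemma HB_gen eps phi0 M i j : comm (HB eps phi0) M i j = comm (Hgen 0 (eps * cos phi0) (eps * sin phi0)) M i j.
Proof. destruct i, j; apply injective_projections; cmp; ring. Qed.

Lemma init_vals b c : forall rho : R -> M2, rho 0 = bloch_state 0 0 1 ->
  dz rho 0 = 1 /\ yI b c rho 0 = 0 /\ vR b c rho 0 = 0.
Proof. intros rho H. unfold dz, yI, vR; rewrite H. repeat split; cmp; field. Qed.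

Lemma zc (M : M2) : zcoord M = Re (M false false) - Re (M true true).
Proof. cmp. ring. Qed.

Lemma lim_minus {F} {FF : Filter F} (f g : R -> R) a b : filterlim f F (locally a) -> filterlim g F (locally b) ->
  filterlim (fun x => f x - g x) F (locally (a - b)).
Proof. intros Hf Hg. unfold Rminus. apply lim_plus; [exact Hf|]. apply lim_opp; exact Hg. Qed.
Lemma lim_scal {F} {FF : Filter F} (f : R -> R) k a : filterlim f F (locally a) ->
  filterlim (fun x => k * f x) F (locally (k * a)).
Proof. intros Hf. apply lim_mult; [apply lim_const|exact Hf]. Qed.
Lemma lim_Re (f : R -> C) F z : Filter F -> filterlim f F (locally z) -> filterlim (fun s => Re (f s)) F (locally (Re z)).
Proof.
  intros HF H. eapply filterlim_comp. exact H.
  apply (continuous_fst (U:=R_UniformSpace) (V:=R_UniformSpace) (fst z) (snd z)).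
Qed.
Lemma lim_Im (f : R -> C) F z : Filter F -> filterlim f F (locally z) -> filterlim (fun s => Im (f s)) F (locally (Im z)).
Proof.
  intros HF H. eapply filterlim_comp. exact H.
  apply (continuous_snd (U:=R_UniformSpace) (V:=R_UniformSpace) (fst z) (snd z)).
Qed.

Section Red.
Variables (rho : R -> M2) (a : R -> R) (b c : R) (H : R -> M2).
Hypothesis HH : forall t M i j, comm (H t) M i j = comm (Hgen (a t) b c) M i j.
Hypothesis Hs : solves_vN H rho (bloch_state 0 0 1).

Lemma Hd' t : 0 < t -> forall i j, is_derive (fun s => rho s i j) t ((- Ci) * comm (Hgen (a t) b c) (rho t) i j)%C.
Proof. intros Ht i j. rewrite <- HH. apply Hs; exact Ht. Qed.

Lemma red_dz t : 0 < t -> is_derive (dz rho) t (2 * yI b c rho t).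
Proof. intros Ht. apply der_dz with (a := a t). apply Hd'; exact Ht. Qed.
Lemma red_yI t : 0 < t -> is_derive (yI b c rho) t (a t * vR b c rho t - 2 * ((b^2+c^2)/4) * dz rho t).
Proof. intros Ht. apply der_yI. apply Hd'; exact Ht. Qed.
Lemma red_vR t : 0 < t -> is_derive (vR b c rho) t (- a t * yI b c rho t).
Proof. intros Ht. apply der_vR. apply Hd'; exact Ht. Qed.

Lemma lim_c i j : filterlim (fun s => rho s i j) (at_right 0) (locally (rho 0 i j)).
Proof. apply Hs. Qed.

Lemma lim_dz : filterlim (dz rho) (at_right 0) (locally (dz rho 0)).
Proof. unfold dz. apply lim_minus; apply lim_Re; try apply lim_c; apply filter_filter. Qed.
Lemma lim_yI : filterlim (yI b c rho) (at_right 0) (locally (yI b c rho 0)).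
Proof. unfold yI. apply lim_plus; apply lim_scal; [apply lim_minus|apply lim_plus];
  first [apply lim_Re | apply lim_Im]; try apply lim_c; apply filter_filter. Qed.
Lemma lim_vR : filterlim (vR b c rho) (at_right 0) (locally (vR b c rho 0)).
Proof. unfold vR. apply lim_plus; apply lim_scal; [apply lim_plus|apply lim_minus];
  first [apply lim_Re | apply lim_Im]; try apply lim_c; apply filter_filter. Qed.
End Red.

Ltac dv2 H := match type of H with is_derive ?f ?x ?d =>
  replace (Derive (fun y => f y) x) with d by (symmetry; apply is_derive_unique; exact H) end.

Lemma en3 (f g h : R -> R) df dg dh x k : is_derive f x df -> is_derive g x dg -> is_derive h x dh ->
  is_derive (fun s => k * (f s * f s) + g s * g s + h s * h s) x (2*k*f x*df + 2*g x*dg + 2*h x*dh).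
Proof. intros H1 H2 H3. auto_derive. repeat split; eexists; eassumption.
  dv2 H1; dv2 H2; dv2 H3; ring. Qed.

Lemma enB (f g : R -> R) df dg x k e : is_derive f x df -> is_derive g x dg ->
  is_derive (fun s => k * ((f s - cos (e*s)) * (f s - cos (e*s))) + (g s + e/2 * sin (e*s)) * (g s + e/2 * sin (e*s))) x
   (2*k*(f x - cos (e*x))*(df + e * sin (e*x)) + 2*(g x + e/2 * sin (e*x))*(dg + e/2*e*cos (e*x))).
Proof. intros H1 H2. auto_derive. repeat split; eexists; eassumption.
  dv2 H1; dv2 H2; ring. Qed.

Theorem lemma2 (eps w phi0 : R) (wt : R -> R) (rhoA rhoB : R -> M2) :
  0 < eps -> 0 <= w ->
  (forall t, Rabs (wt t) <= w) ->
  solves_vN (HA eps phi0 wt) rhoA (bloch_state 0 0 1) ->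
  solves_vN (fun _ => HB eps phi0) rhoB (bloch_state 0 0 1) ->
  forall t, 0 <= t <= PI / (2 * sqrt (4 + eps ^ 2)) ->
    zcoord (rhoA t) >= zcoord (rhoB t).
Proof.
  intros Heps Hw Hwt HsA HsB t [Ht0 Ht1].
  set (b := eps * cos phi0). set (c := eps * sin phi0).
  assert (Hbc : b ^ 2 + c ^ 2 = eps ^ 2).
  { unfold b, c. pose proof (sin2_cos2 phi0) as Hsc. unfold Rsqr in Hsc.
    replace (eps ^ 2) with (eps ^ 2 * (sin phi0 * sin phi0 + cos phi0 * cos phi0)) by (rewrite Hsc; ring). ring. }
  set (kb := (b ^ 2 + c ^ 2) / 4).
  assert (Hkb : kb = eps ^ 2 / 4) by (unfold kb; rewrite Hbc; ring).
  assert (HHA : forall t M i j, comm (HA eps phi0 wt t) M i j = comm (Hgen ((fun s => 1 + wt s) t) b c) M i j)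
    by reflexivity.
  assert (HHB : forall (t : R) M i j, comm ((fun _ => HB eps phi0) t) M i j = comm (Hgen ((fun _ => 0) t) b c) M i j)
    by (intros; apply HB_gen).
  rewrite !zc. change (Re (rhoA t false false) - Re (rhoA t true true)) with (dz rhoA t).
  change (Re (rhoB t false false) - Re (rhoB t true true)) with (dz rhoB t).
  destruct (init_vals b c rhoA (proj1 HsA)) as [IA1 [IA2 IA3]].
  destruct (init_vals b c rhoB (proj1 HsB)) as [IB1 [IB2 IB3]].
  assert (HeT : eps * t <= PI / 2).
  { pose proof PI_RGT_0.
    assert (Hsq : 0 < sqrt (4 + eps ^ 2)) by (apply sqrt_lt_R0; nra).
    assert (Hsq2 : sqrt (4 + eps ^ 2) * sqrt (4 + eps ^ 2) = 4 + eps ^ 2) by (apply sqrt_sqrt; nra).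
    assert (Hle : eps <= sqrt (4 + eps ^ 2)) by nra.
    assert (Ht2 : t * (2 * sqrt (4 + eps ^ 2)) <= PI).
    { apply (Rmult_le_compat_r (2 * sqrt (4 + eps ^ 2))) in Ht1; [|lra].
      unfold Rdiv in Ht1. rewrite Rmult_assoc, Rinv_l in Ht1 by lra. lra. }
    nra. }
  assert (HA1 : cos (eps * t) <= dz rhoA t).
  { set (FA := fun s => kb * (dz rhoA s * dz rhoA s) + yI b c rhoA s * yI b c rhoA s + vR b c rhoA s * vR b c rhoA s).
    assert (HFA : forall x, 0 <= x -> FA x <= FA 0).
    { apply mono0 with (dF := fun _ => 0).
      - unfold FA. apply lim_plus; [apply lim_plus|]; try apply lim_scal; apply lim_mult;
          first [apply (lim_dz rhoA _ HsA) | apply (lim_yI rhoA b c _ HsA) | apply (lim_vR rhoA b c _ HsA)].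
      - intros x Hx. split; [|lra]. unfold FA. eapply is_derive_val.
        + apply en3; [apply (red_dz rhoA _ b c _ HHA HsA x Hx) | apply (red_yI rhoA _ b c _ HHA HsA x Hx)
                     | apply (red_vR rhoA _ b c _ HHA HsA x Hx)].
        + match goal with |- ?x = ?y => change (@eq R x y) end. unfold kb. ring. }
    apply (compare (dz rhoA) (fun x => 2 * yI b c rhoA x) eps t Heps IA1 (lim_dz rhoA _ HsA)).
    - intros x Hx. apply is_derive_Reals. apply (red_dz rhoA _ b c _ HHA HsA x Hx).
    - intros x Hx. specialize (HFA x ltac:(lra)). unfold FA in HFA. rewrite IA1, IA2, IA3 in HFA.
      rewrite Hkb in HFA. nra.
    - exact Ht0.
    - exact HeT. }
  assert (HB1 : dz rhoB t <= cos (eps * t)).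
  { set (GB := fun s => kb * ((dz rhoB s - cos (eps*s)) * (dz rhoB s - cos (eps*s))) +
       (yI b c rhoB s + eps/2 * sin (eps*s)) * (yI b c rhoB s + eps/2 * sin (eps*s))).
    assert (HGB : forall x, 0 <= x -> GB x <= GB 0).
    { apply mono0 with (dF := fun _ => 0).
      - unfold GB. apply lim_plus; [apply lim_scal|]; apply lim_mult;
          first [apply lim_minus | apply lim_plus];
          first [apply (lim_dz rhoB _ HsB) | apply (lim_yI rhoB b c _ HsB)
                | apply lim_scal | apply (lim_cont (fun s => cos (eps * s))) ];
          try (intros; reg);
          apply (lim_cont (fun s => sin (eps * s))); intros; reg.
      - intros x Hx. split; [|lra]. unfold GB. eapply is_derive_val.
        + apply enB; [apply (red_dz rhoB _ b c _ HHB HsB x Hx) | apply (red_yI rhoB _ b c _ HHB HsB x Hx)].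
        + match goal with |- ?x = ?y => change (@eq R x y) end. rewrite Hbc, Hkb. field. }
    assert (HG0 : GB 0 = 0).
    { unfold GB. rewrite IB1, IB2, Rmult_0_r, cos_0, sin_0. ring. }
    specialize (HGB t Ht0). rewrite HG0 in HGB. unfold GB in HGB. rewrite Hkb in HGB.
    set (e1 := dz rhoB t - cos (eps * t)) in *.
    set (e2 := yI b c rhoB t + eps / 2 * sin (eps * t)) in *.
    assert (Hsq : 0 <= e2 * e2) by (pose proof (Rle_0_sqr e2); unfold Rsqr in *; lra).
    assert (Hsq1 : 0 <= e1 * e1) by (pose proof (Rle_0_sqr e1); unfold Rsqr in *; lra).
    assert (Hep : 0 < eps ^ 2 / 4) by (apply Rmult_lt_0_compat; [apply pow_lt; lra | lra]).
    assert (Hz : eps ^ 2 / 4 * (e1 * e1) <= 0) by lra.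
    assert (Hz2 : e1 * e1 <= 0).
    { apply Rnot_lt_le; intro Hc. pose proof (Rmult_lt_0_compat _ _ Hep Hc). lra. }
    assert (He1 : e1 = 0) by nra.
    unfold e1 in He1. lra. }
  lra.
Qed.
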